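(* Given index sets $\hat{\mathcal{R}}\subseteq\mathcal{R}$ and $\hat{\mathcal{L}}\subseteq\mathcal{L}$, we have: 1. $[\theta^*(C)]_{\hat{\mathcal{R}}}=\alpha$ and $[\theta^*(C)]_{\hat{\mathcal{L}}}=\beta$. 2. Let $\hat{\mathcal{S}}=\hat{\mathcal{R}}\cup\hat{\mathcal{L}}$, $|\hat{\mathcal{S}}^{\rm c}|$ be the cardinality of $\hat{\mathcal{S}}^{\rm c}$, $\hat{\mathbf{G}}_{11}=[\mathbf{Z}^T]_{\hat{\mathcal{S}}^{\rm c}}^T[\mathbf{Z}^T]_{\hat{\mathcal{S}}^{\rm c}}$, $\hat{\mathbf{G}}_{12}=[\mathbf{Z}^T]_{\hat{\mathcal{S}}^{\rm c}}^T[\mathbf{Z}^T]_{\hat{\mathcal{S}}}$ and $\hat{\mathbf{y}}=[\bar{\mathbf{y}}]_{\hat{\mathcal{S}}^{\rm c}}-C\hat{\mathbf{G}}_{12}[\theta^*(C)]_{\hat{\mathcal{S}}}$. Then $[\theta^*(C)]_{\hat{\mathcal{S}}^{\rm c}}$ can be computed by solving $$\min_{\hat{\theta}\in\mathbb{R}^{|\hat{\mathcal{S}}^{\rm c}|}}\ \frac{C}{2}\hat{\theta}^T\hat{\mathbf{G}}_{11}\hat{\theta}-\hat{\mathbf{y}}^T\hat{\theta}\quad \text{s.t. } \hat{\theta}\in[\alpha,\beta]^{|\hat{\mathcal{S}}^{\rm c}|}.$$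
   Context: Observations $\{\mathbf{x}_i,y_i\}_{i=1}^l$ with $\mathbf{x}_i\in\mathbb{R}^n$, $y_i\in\mathbb{R}$, and scalars $a_i,b_i$. Consider the primal problem $\min_{\mathbf{w}\in\mathbb{R}^n}\frac12\|\mathbf{w}\|^2+C\sum_{i=1}^l\varphi(\mathbf{w}^T(a_i\mathbf{x}_i)+b_iy_i)$ with $C>0$, where $\varphi:\mathbb{R}\to\mathbb{R}_+$ is a nonconstant continuous sublinear (convex and positively homogeneous) function; its conjugate $\varphi^*$ is the indicator function of a closed interval $[\alpha,\beta]$ with $\alpha<\beta$. Let $\mathbf{Z}=(a_1\mathbf{x}_1,\ldots,a_l\mathbf{x}_l)^T$ and $\bar{\mathbf{y}}=(b_1y_1,\ldots,b_ly_l)^T$. The dual problem is $\min_{\theta\in[\alpha,\beta]^l}\frac{C}{2}\|\mathbf{Z}^T\theta\|^2-\langle\bar{\mathbf{y}},\theta\rangle$. Let $\mathbf{w}^*(C)$ and $\theta^*(C)$ be the primal and dual optimal solutions, related by $\mathbf{w}^*(C)=-C\mathbf{Z}^T\theta^*(C)$. Define $\mathcal{R}=\{i:-\langle\mathbf{w}^*(C),a_i\mathbf{x}_i\rangle>b_iy_i\}$ and $\mathcal{L}=\{i:-\langle\mathbf{w}^*(C),a_i\mathbf{x}_i\rangle<b_iy_i\}$ (indices of non-support vectors). Notation: $\mathcal{I}=\{1,\ldots,l\}$; for $\mathcal{J}\subseteq\mathcal{I}$, $\mathcal{J}^{\rm c}=\mathcal{I}\setminus\mathcal{J}$, $[\mathbf{x}]_{\mathcal{J}}$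 is the subvector of $\mathbf{x}$ indexed by $\mathcal{J}$ and $[\mathbf{M}]_{\mathcal{J}}$ is the submatrix of columns of $\mathbf{M}$ indexed by $\mathcal{J}$. *)

(* Defs.v *)
From HB Require Import structures.
From mathcomp Require Import all_boot all_order all_algebra.
From mathcomp Require Import all_classical all_reals all_analysis.
Set Implicit Arguments. Unset Strict Implicit. Unset Printing Implicit Defensive.
Import Order.TTheory GRing.Theory Num.Theory.
Import numFieldNormedType.Exports.
Local Open Scope ring_scope.

(* The convex conjugate phi^*(s) = sup_t (s t - phi t) is the indicator function
   of [alpha, beta]: it equals 0 on [alpha,beta] and +oo outside. *)
Definition conj_is_indicator (R : realType) (phi : R -> R) (alpha beta : R) : Prop :=
  (forall s, alpha <= s <= beta ->
     (forall t, s * t - phi t <= 0) /\ (forall e, 0 < e -> exists t, - e < s * t - phi t))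
  /\ (forall s, ~ (alpha <= s <= beta) -> forall M, exists t, M < s * t - phi t).

Definition convex_fun (R : realType) (phi : R -> R) : Prop :=
  forall x y t, 0 <= t <= 1 -> phi (t * x + (1 - t) * y) <= t * phi x + (1 - t) * phi y.

Definition pos_homogeneous (R : realType) (phi : R -> R) : Prop :=
  forall t x, 0 < t -> phi (t * x) = t * phi x.

Definition admissible_loss (R : realType) (phi : R -> R) (alpha beta : R) : Prop :=
  [/\ forall t, 0 <= phi t,
      exists x y, phi x != phi y,
      continuous phi,
      convex_fun phi & pos_homogeneous phi]
  /\ conj_is_indicator phi alpha beta.

Definition Zmat (R : realType) (l n : nat) (a : 'I_l -> R) (x : 'I_l -> 'rV[R]_n)
  : 'M[R]_(l, n) := \matrix_(i, j) (a i * x i 0 j).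

Definition ybar (R : realType) (l : nat) (b y : 'I_l -> R) : 'cV[R]_l :=
  \col_i (b i * y i).

Definition sqnorm (R : realType) (n : nat) (v : 'cV[R]_n) : R := \sum_j v j 0 ^+ 2.

Definition dotv (R : realType) (n : nat) (u v : 'cV[R]_n) : R := \sum_j u j 0 * v j 0.

Definition primal_obj (R : realType) (l n : nat) (phi : R -> R) (C : R)
  (Z : 'M[R]_(l, n)) (yb : 'cV[R]_l) (w : 'cV[R]_n) : R :=
  sqnorm w / 2 + C * \sum_i phi ((Z *m w) i 0 + yb i 0).

Definition dual_obj (R : realType) (l n : nat) (C : R)
  (Z : 'M[R]_(l, n)) (yb : 'cV[R]_l) (theta : 'cV[R]_l) : R :=
  C / 2 * sqnorm (Z^T *m theta) - dotv yb theta.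

Definition in_box (R : realType) (m : nat) (alpha beta : R) (v : 'cV[R]_m) : Prop :=
  forall i, alpha <= v i 0 <= beta.

(* the k-th element (in increasing order) of A *)
Definition subidx (l : nat) (A : {set 'I_l}) (k : 'I_#|A|) : 'I_l := enum_val k.

(* rows of M indexed by A; [v]_A = subrows A v for a column vector v, and
   the column submatrix [Z^T]_A equals (subrows A Z)^T *)
Definition subrows (R : Type) (l n : nat) (A : {set 'I_l}) (M : 'M[R]_(l, n))
  : 'M[R]_(#|A|, n) := rowsub (@subidx l A) M.

Definition reduced_obj (R : realType) (m : nat) (C : R) (G11 : 'M[R]_m)
  (yh : 'cV[R]_m) (th : 'cV[R]_m) : R :=
  C / 2 * (th^T *m G11 *m th) 0 0 - dotv yh th.

(* Main.v *)
Require Import Defs.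
From HB Require Import structures.
From mathcomp Require Import all_boot all_order all_algebra.
From mathcomp Require Import all_classical all_reals all_analysis.
From mathcomp Require Import ring lra.
Import Order.TTheory GRing.Theory Num.Theory.
Set Implicit Arguments. Unset Strict Implicit.
Local Open Scope ring_scope.

Section H.
Variable R : realType.

Definition dot (m : nat) (u v : 'cV[R]_m) : R := (u^T *m v) 0 0.

Lemma dotvE m (u v : 'cV[R]_m) : dotv u v = dot u v.
Proof. by rewrite /dotv /dot mxE; apply: eq_bigr => j _; rewrite mxE. Qed.

Lemma sqnormE m (v : 'cV[R]_m) : sqnorm v = dot v v.
Proof. by rewrite /sqnorm -dotvE; apply: eq_bigr => j _; rewrite expr2. Qed.

Lemma dotC m (u v : 'cV[R]_m) : dot u v = dot v u.
Proof. by rewrite /dot -[v^T *m u]trmxK trmx_mul trmxK [in RHS]mxE. Qed.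

Lemma dotDl m (u v w : 'cV[R]_m) : dot (u + v) w = dot u w + dot v w.
Proof. by rewrite /dot linearD mulmxDl [LHS]mxE. Qed.

Lemma dotZl m t (u w : 'cV[R]_m) : dot (t *: u) w = t * dot u w.
Proof. by rewrite /dot linearZ -scalemxAl [LHS]mxE. Qed.

Lemma dotDr m (u v w : 'cV[R]_m) : dot w (u + v) = dot w u + dot w v.
Proof. by rewrite dotC dotDl !(dotC w). Qed.

Lemma dotZr m t (u w : 'cV[R]_m) : dot w (t *: u) = t * dot w u.
Proof. by rewrite dotC dotZl dotC. Qed.

Lemma dotNl m (u w : 'cV[R]_m) : dot (- u) w = - dot u w.
Proof. by rewrite -scaleN1r dotZl mulN1r. Qed.
Lemma dotNr m (u w : 'cV[R]_m) : dot w (- u) = - dot w u.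
Proof. by rewrite dotC dotNl dotC. Qed.
Lemma dotBl m (u v w : 'cV[R]_m) : dot (u - v) w = dot u w - dot v w.
Proof. by rewrite dotDl dotNl. Qed.
Lemma dotBr m (u v w : 'cV[R]_m) : dot w (u - v) = dot w u - dot w v.
Proof. by rewrite dotDr dotNr. Qed.

Lemma dot_ge0 m (u : 'cV[R]_m) : 0 <= dot u u.
Proof. by rewrite -sqnormE /sqnorm sumr_ge0 // => j _; rewrite sqr_ge0. Qed.

Lemma dot_mull m k (M : 'M[R]_(m,k)) u v : dot (M *m u) v = dot u (M^T *m v).
Proof. by rewrite /dot trmx_mul mulmxA. Qed.

Lemma split_mul l (S : {set 'I_l}) p q (M : 'M[R]_(l,p)) (N : 'M[R]_(l,q)) :
  M^T *m N = (subrows (~:S) M)^T *m subrows (~:S) N + (subrows S M)^T *m subrows S N.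
Proof.
apply/matrixP => j k; rewrite !mxE (bigID (fun i => i \in S)) /= addrC.
congr (_ + _).
- rewrite (eq_bigl (fun i => i \in ~: S)); last by move=> i; rewrite finset.in_setC.
  rewrite (big_enum_val (A := mem (~: S))) /=.
  by apply: eq_bigr => i _; rewrite !mxE.
- rewrite (big_enum_val (A := mem S)) /=.
  by apply: eq_bigr => i _; rewrite !mxE.
Qed.

Lemma dot_delta m (i : 'I_m) (v : 'cV[R]_m) : dot (delta_mx i 0) v = v i 0.
Proof. by rewrite /dot trmx_delta -rowE mxE. Qed.

Lemma dual_pert l n C (Z : 'M[R]_(l,n)) yb th d t :
  dual_obj C Z yb (th + t *: d) = dual_obj C Z yb th
    + t * (C * dot (Z^T *m th) (Z^T *m d) - dot yb d)
    + t ^+ 2 * (C / 2 * dot (Z^T *m d) (Z^T *m d)).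
Proof.
rewrite /dual_obj !sqnormE !dotvE mulmxDr -scalemxAr !dotDl !dotDr !dotZl !dotZr.
rewrite (dotC (Z^T *m d) (Z^T *m th)).
move: (dot (Z^T *m th) _) (dot (Z^T *m th) _) (dot (Z^T *m d) _) (dot yb th) (dot yb d) => p1 p2 p3 p4 p5. by field.
Qed.

Lemma no_descent (A B T : R) : 0 <= A -> B < 0 -> 0 < T ->
  (forall t, 0 < t -> t <= T -> 0 <= B * t + t ^+ 2 * A) -> False.
Proof.
move=> A0 B0 T0 H.
pose t := Num.min T (- B / (A + 1)).
have A1 : 0 < A + 1 by lra.
have t0 : 0 < t by rewrite lt_min T0 divr_gt0 // oppr_gt0.
have tT : t <= T by rewrite ge_min lexx.
have tB : t <= - B / (A + 1) by rewrite ge_min lexx orbT.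
have := H t t0 tT.
have h1 : t * (A + 1) <= - B by rewrite -ler_pdivlMr.
have h2 : A * t < - B by nra.
nra.
Qed.

Lemma key l n C (Z : 'M[R]_(l,n)) (yb : 'cV[R]_l) (S : {set 'I_l}) (ths th : 'cV[R]_l) :
  subrows S th = subrows S ths ->
  dual_obj C Z yb th =
  reduced_obj C (subrows (~: S) Z *m (subrows (~: S) Z)^T)
     (subrows (~: S) yb - C *: ((subrows (~: S) Z *m (subrows S Z)^T) *m subrows S ths))
     (subrows (~: S) th)
  + (C / 2 * dot ((subrows S Z)^T *m subrows S ths) ((subrows S Z)^T *m subrows S ths)
     - dot (subrows S yb) (subrows S ths)).
Proof.
move=> hS.
set Zc := subrows (~: S) Z; set Zs := subrows S Z; set thc := subrows (~: S) th.
set q := Zs^T *m subrows S ths.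
have e1 : Z^T *m th = Zc^T *m thc + q by rewrite (split_mul S) hS.
have e2 : dot yb th = dot (subrows (~: S) yb) thc + dot (subrows S yb) (subrows S ths).
  by rewrite /dot (split_mul S) [LHS]mxE hS.
have e3 : (thc^T *m (Zc *m Zc^T) *m thc) 0 0 = dot (Zc^T *m thc) (Zc^T *m thc).
  by rewrite /dot trmx_mul trmxK !mulmxA.
have e4 : dot (subrows (~: S) yb - C *: ((Zc *m Zs^T) *m subrows S ths)) thc
   = dot (subrows (~: S) yb) thc - C * dot q (Zc^T *m thc).
  by rewrite dotBl dotZl -mulmxA dot_mull.
rewrite /dual_obj /reduced_obj sqnormE !dotvE e1 e2 e3 e4 dotDl !dotDr (dotC q (Zc^T *m thc)).
move: (dot (Zc^T *m thc) _) (dot q _) (dot _ q) (dot (subrows (~: S) yb) thc) (dot (subrows S yb) _) => p1 p2 p3 p4 p5.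
by field.
Qed.

Lemma descent_fix l n C (Z : 'M[R]_(l,n)) yb alpha beta (th d : 'cV[R]_l) T :
  0 <= C -> 0 < T ->
  (forall th', in_box alpha beta th' -> dual_obj C Z yb th <= dual_obj C Z yb th') ->
  (forall t, 0 < t -> t <= T -> in_box alpha beta (th + t *: d)) ->
  C * dot (Z^T *m th) (Z^T *m d) - dot yb d < 0 -> False.
Proof.
move=> C0 T0 hopt hbox hB.
apply: (no_descent _ hB T0 (A := C / 2 * dot (Z^T *m d) (Z^T *m d))).
  by rewrite mulr_ge0 ?dot_ge0 // divr_ge0.
move=> t t0 tT; have := hopt _ (hbox t t0 tT); rewrite dual_pert.
rewrite [_ * t]mulrC; lra.
Qed.

Definition embed l (A : {set 'I_l}) (th : 'cV[R]_#|A|) (base : 'cV[R]_l) : 'cV[R]_l :=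
  \col_(i < l) (if [pick k : 'I_#|A| | @subidx l A k == i] is Some k then th k 0 else base i 0).
Arguments embed {l} A th base.

Lemma embed_sub l (A : {set 'I_l}) th base : subrows A (embed A th base) = th.
Proof.
apply/matrixP => k j; rewrite !mxE (ord1 j).
case: pickP => [k' /eqP e | h]; first by rewrite (enum_val_inj e).
by have := h k; rewrite eqxx.
Qed.

Lemma embed_out l (A : {set 'I_l}) th base i : i \notin A -> embed A th base i 0 = base i 0.
Proof.
move=> hi; rewrite mxE; case: pickP => [k /eqP e | //].
by move: hi; rewrite -e /subidx enum_valP.
Qed.

Lemma embed_box l (A : {set 'I_l}) th base alpha beta :
  in_box alpha beta th -> in_box alpha beta base -> in_box alpha beta (embed A th base).
Proof. by move=> h1 h2 i; rewrite mxE; case: pickP => [k _|_]. Qed.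

Lemma sub_eq l (S : {set 'I_l}) (u v : 'cV[R]_l) :
  (forall i, i \in S -> u i 0 = v i 0) -> subrows S u = subrows S v.
Proof.
move=> h; apply/matrixP => k j; rewrite !mxE (ord1 j); apply: h.
exact: enum_valP.
Qed.
End H.
Arguments embed {R l} A th base.
Theorem lemma3 (R : realType) (l n : nat)
  (x : 'I_l -> 'rV[R]_n) (y a b : 'I_l -> R)
  (phi : R -> R) (alpha beta C : R)
  (hab : alpha < beta) (hC : 0 < C)
  (hphi : admissible_loss phi alpha beta)
  (wstar : 'cV[R]_n) (thstar : 'cV[R]_l)
  (hw : forall w, primal_obj phi C (Zmat a x) (ybar b y) wstar
                  <= primal_obj phi C (Zmat a x) (ybar b y) w)
  (hth_feas : in_box alpha beta thstar)
  (hth : forall th, in_box alpha beta th ->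
           dual_obj C (Zmat a x) (ybar b y) thstar <= dual_obj C (Zmat a x) (ybar b y) th)
  (hrel : wstar = - C *: ((Zmat a x)^T *m thstar))
  (Rhat Lhat : {set 'I_l})
  (hR : forall i, i \in Rhat -> - (Zmat a x *m wstar) i 0 > ybar b y i 0)
  (hL : forall i, i \in Lhat -> - (Zmat a x *m wstar) i 0 < ybar b y i 0) :
  let Z := Zmat a x in
  let S := Rhat :|: Lhat in
  let Sc := ~: S in
  let G11 := subrows Sc Z *m (subrows Sc Z)^T in
  let G12 := subrows Sc Z *m (subrows S Z)^T in
  let yhat := subrows Sc (ybar b y) - C *: (G12 *m subrows S thstar) in
  [/\ (forall i, i \in Rhat -> thstar i 0 = alpha),
      (forall i, i \in Lhat -> thstar i 0 = beta),
      (* [theta*]_{S^c} solves the reduced problem ... *)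
      in_box alpha beta (subrows Sc thstar) /\
      (forall th, in_box alpha beta th ->
         reduced_obj C G11 yhat (subrows Sc thstar) <= reduced_obj C G11 yhat th)
    & (* ... and any solution of the reduced problem, completed by the fixed
         values alpha on Rhat and beta on Lhat, is a dual optimal solution *)
      forall th : 'cV[R]_#|Sc|,
        in_box alpha beta th ->
        (forall th', in_box alpha beta th' ->
           reduced_obj C G11 yhat th <= reduced_obj C G11 yhat th') ->
        forall full : 'cV[R]_l,
          (forall i, i \in Rhat -> full i 0 = alpha) ->
          (forall i, i \in Lhat -> full i 0 = beta) ->
          subrows Sc full = th ->
          in_box alpha beta full /\
          (forall th', in_box alpha beta th' ->
             dual_obj C Z (ybar b y) full <= dual_obj C Z (ybar b y) th')].

Proof.
move=> Z S Sc G11 G12 yhat.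
have C0 : 0 <= C by exact: ltW.
have hZw : forall i, (Zmat a x *m wstar) i 0 = - C * (Zmat a x *m ((Zmat a x)^T *m thstar)) i 0.
  by move=> i; rewrite hrel -scalemxAr mxE.
have dZ : forall (d : 'cV[R]_l), dot ((Zmat a x)^T *m thstar) ((Zmat a x)^T *m d)
    = dot d (Zmat a x *m ((Zmat a x)^T *m thstar)).
  by move=> d; rewrite dotC dot_mull trmxK.
have hRa : forall i, i \in Rhat -> thstar i 0 = alpha.
  move=> i hi; have := hR i hi; rewrite hZw => hg.
  have /andP [h1 h2] := hth_feas i.
  case: (ltrP alpha (thstar i 0)) => [hlt | hle]; last by apply/eqP; rewrite eq_le hle h1.
  exfalso.
  apply: (descent_fix (d := - delta_mx i 0) C0 _ hth _ _ (T := thstar i 0 - alpha)).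
  - by rewrite subr_gt0.
  - move=> t t0 tT j; rewrite !mxE; case: (eqVneq i j) => [<-|hij].
      by rewrite /= ?mulr1n ?mulrN1 ?mulr1; apply/andP; split; lra.
    by rewrite /= ?mulr0n ?oppr0 ?mulr0 ?addr0.
  - rewrite dZ dotNl dot_delta dotNr dotC dot_delta.
    rewrite /ybar mxE in hg *; lra.
have hLb : forall i, i \in Lhat -> thstar i 0 = beta.
  move=> i hi; have := hL i hi; rewrite hZw => hg.
  have /andP [h1 h2] := hth_feas i.
  case: (ltrP (thstar i 0) beta) => [hlt | hle]; last by apply/eqP; rewrite eq_le hle h2.
  exfalso.
  apply: (descent_fix (d := delta_mx i 0) C0 _ hth _ _ (T := beta - thstar i 0)).
  - by rewrite subr_gt0.
  - move=> t t0 tT j; rewrite !mxE; case: (eqVneq i j) => [<-|hij].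
      by rewrite /= ?mulr1n ?mulrN1 ?mulr1; apply/andP; split; lra.
    by rewrite /= ?mulr0n ?oppr0 ?mulr0 ?addr0.
  - rewrite dZ dot_delta dotC dot_delta.
    rewrite /ybar mxE in hg *; lra.
have hfullS : forall full : 'cV[R]_l, (forall i, i \in Rhat -> full i 0 = alpha) ->
    (forall i, i \in Lhat -> full i 0 = beta) -> subrows S full = subrows S thstar.
  move=> full hfR hfL; apply: sub_eq => i; rewrite finset.in_setU => /orP [hi|hi].
    by rewrite hfR // hRa.
  by rewrite hfL // hLb.
have K := @key R l n C Z (ybar b y) S thstar.
have hred : forall th, in_box alpha beta th ->
    reduced_obj C G11 yhat (subrows Sc thstar) <= reduced_obj C G11 yhat th.
  move=> th hb.
  have e1 := K thstar erefl.
  have e2 : subrows S (embed Sc th thstar) = subrows S thstar.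
    by apply: sub_eq => i hi; rewrite embed_out // /Sc finset.in_setC hi.
  have := hth _ (embed_box (A:=Sc) hb hth_feas); rewrite (K _ e2) (K _ erefl) embed_sub.
  rewrite /yhat /G11 /G12 /Sc; lra.
have hsubbox : in_box alpha beta (subrows Sc thstar).
  by move=> i; rewrite mxE; exact: hth_feas.
split => //.
move=> th hb hopt full hfR hfL hsub.
have hS := hfullS full hfR hfL.
split.
  move=> i; case: (boolP (i \in S)) => hi.
    move: hi; rewrite finset.in_setU => /orP [hi|hi].
      by rewrite hfR // lexx ltW.
    by rewrite hfL // lexx ltW.
  have hi' : i \in Sc by rewrite /Sc finset.in_setC.
  move: hb; rewrite -hsub => hb.
  by have := hb (enum_rank_in hi' i); rewrite mxE /subidx enum_rankK_in.
move=> th' hb'.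
have h1 := hth th' hb'.
have h2 := hopt _ hsubbox.
move: h1; rewrite (K _ hS) (K _ erefl) hsub.
rewrite /yhat /G11 /G12 /Sc in h2 *; lra.
Qed.
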